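(* Let $S$ be a finite poset containing a subposet (with induced order) isomorphic to $W^{2k}$ for some $k\ge2$, and suppose $f_S$ is positive semidefinite. Then $C(f_S)\ne\varnothing$.
   Context: $f_S(x)=\sum_i x_i^2+\sum_{s_i<s_j}x_ix_j$. $H_n=\{x:\sum x_i=0\}$; $C(f)$ is the set of $h\in H_n\setminus\{0\}$ with either all $\partial f/\partial x_i(h)\le0$ or all $\ge0$. $W^{2k}=\{s_1^-,\dots,s_k^-,s_1^+,\dots,s_k^+\}$ whose only strict relations are $s_i^-<s_i^+$ ($1\le i\le k$), $s_i^-<s_{i+1}^+$ ($1\le i\le k-1$), $s_k^-<s_1^+$. *)

(* Defs.v *)
From mathcomp Require Import all_boot all_order all_algebra.
From mathcomp Require Import reals.
From mathcomp Require Import mpoly.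
Set Implicit Arguments. Unset Strict Implicit. Unset Printing Implicit Defensive.
Import Order.TTheory GRing.Theory Num.Theory.
Local Open Scope ring_scope.

(* The elements of a finite poset S are enumerated s_0, ..., s_{n-1}
   (n = #|S|) via enum_val; variable x_i of f_S corresponds to s_i. *)

Definition fS (R : realType) (d : Order.disp_t) (S : finPOrderType d)
  : {mpoly R[#|S|]} :=
  \sum_(i < #|S|) 'X_i ^+ 2
  + \sum_(i < #|S|) \sum_(j < #|S| | (enum_val i < enum_val j)%O) 'X_i * 'X_j.

Definition psd (R : realType) (n : nat) (f : {mpoly R[n]}) : Prop :=
  forall x : 'I_n -> R, 0 <= f.@[x].

Definition inH (R : realType) (n : nat) (h : 'I_n -> R) : Prop :=
  \sum_(i < n) h i = 0.

Definition inC (R : realType) (n : nat) (f : {mpoly R[n]}) (h : 'I_n -> R) : Prop :=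
  [/\ inH h, (exists i, h i != 0) &
      (forall i : 'I_n, (f^`M(i)).@[h] <= 0) \/ (forall i : 'I_n, 0 <= (f^`M(i)).@[h])].

(* W^{2k}: elements (i, false) = s_{i+1}^-, (i, true) = s_{i+1}^+ (0-indexed i < k);
   strict relations s_i^- < s_i^+, s_i^- < s_{i+1}^+, s_k^- < s_1^+. *)
Definition W_lt (k : nat) : rel ('I_k * bool) :=
  fun a b => [&& ~~ a.2, b.2 & (b.1 == a.1) || (val b.1 == (val a.1).+1 %% k)%N].

Definition contains_W (d : Order.disp_t) (S : finPOrderType d) (k : nat) : Prop :=
  exists g : 'I_k * bool -> S,
    injective g /\ forall a b, (g a < g b)%O = W_lt a b.

(* Main.v *)
Require Import Defs.
From mathcomp Require Import all_boot all_order all_algebra.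
From mathcomp Require Import reals.
From mathcomp Require Import mpoly.
From mathcomp Require Import ring lra zify.
Set Implicit Arguments. Unset Strict Implicit. Unset Printing Implicit Defensive.
Import Order.TTheory GRing.Theory Num.Theory.
Local Open Scope ring_scope.

Lemma dX (R : realType) n (i m : 'I_n) : (('X_i : {mpoly R[n]})^`M(m)) = ((i == m)%:R)%:MP.
Proof.
rewrite mderivX mnm1E.
case: eqP => [->|_]; last by rewrite scale0r mpolyC0.
have -> : (U_(m) - U_(m) = 0)%MM by apply/mnmP => j; rewrite mnmBE subnn mnm0E.
by rewrite mpolyX0 scale1r mpolyC1.
Qed.

Lemma md_sum (R : realType) n (m : 'I_n) (I : Type) (r : seq I) (P : pred I) (F : I -> {mpoly R[n]}) :
  (\sum_(i <- r | P i) F i)^`M(m) = \sum_(i <- r | P i) (F i)^`M(m).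
Proof. by elim/big_rec2: _ => [|i a b _ <-]; rewrite ?mderiv0 ?mderivD. Qed.

Lemma me_sum (R : realType) n (x : 'I_n -> R) (I : Type) (r : seq I) (P : pred I) (F : I -> {mpoly R[n]}) :
  (\sum_(i <- r | P i) F i).@[x] = \sum_(i <- r | P i) (F i).@[x].
Proof. by elim/big_rec2: _ => [|i a b _ <-]; rewrite ?meval0 ?mevalD. Qed.

Section S.
Variables (R : realType) (d : Order.disp_t) (S : finPOrderType d).
Local Notation n := #|S|.
Local Notation v := (@enum_val S (pred_of_simpl predT)).

Lemma evalE (x : 'I_n -> R) : (fS R S).@[x] =
  \sum_(i < n) x i ^+ 2 + \sum_(i < n) \sum_(j < n | (enum_val i < enum_val j)%O) x i * x j.
Proof.
rewrite /fS mevalD !raddf_sum /=; congr (_ + _); apply: eq_bigr => i _.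
  by rewrite rmorphXn /= mevalXU.
rewrite raddf_sum; apply: eq_bigr => j _.
by have := mevalM x 'X_i 'X_j; rewrite !mevalXU => <-.
Qed.

Definition ee (m i : 'I_n) : R := (i == m)%:R.

Lemma evalD (m : 'I_n) (x : 'I_n -> R) : ((fS R S)^`M(m)).@[x] =
  \sum_(i < n) (2 * ee m i * x i) + \sum_(i < n) \sum_(j < n | (enum_val i < enum_val j)%O) (ee m i * x j + x i * ee m j).
Proof.
rewrite /fS.
rewrite mderivD mevalD; congr (_ + _).
  rewrite md_sum me_sum; apply: eq_bigr => i _.
  rewrite expr2 mderivM dX mevalD !mevalM mevalC mevalXU /ee; ring.
rewrite md_sum me_sum; apply: eq_bigr => i _.
rewrite md_sum me_sum; apply: eq_bigr => j _.
by rewrite mderivM !dX mevalD !mevalM !mevalC !mevalXU.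
Qed.


Lemma taylor (m : 'I_n) (x : 'I_n -> R) (t : R) :
  (fS R S).@[fun i => x i + t * ee m i] =
  (fS R S).@[x] + t * ((fS R S)^`M(m)).@[x] + t ^+ 2 * (fS R S).@[ee m].
Proof.
rewrite !evalE evalD.
have A : \sum_(i < n) (x i + t * ee m i) ^+ 2 = \sum_(i < n) x i ^+ 2 + t * \sum_(i < n) (2 * ee m i * x i)
   + t ^+ 2 * \sum_(i < n) ee m i ^+ 2.
  by rewrite !mulr_sumr -!big_split; apply: eq_bigr => i _ /=; ring.
have B : \sum_(i < n) \sum_(j < n | (enum_val i < enum_val j)%O) (x i + t * ee m i) * (x j + t * ee m j) =
   \sum_(i < n) \sum_(j < n | (enum_val i < enum_val j)%O) x i * x j
   + t * \sum_(i < n) \sum_(j < n | (enum_val i < enum_val j)%O) (ee m i * x j + x i * ee m j)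
   + t ^+ 2 * \sum_(i < n) \sum_(j < n | (enum_val i < enum_val j)%O) ee m i * ee m j.
  rewrite !mulr_sumr -!big_split; apply: eq_bigr => i _ /=.
  by rewrite !mulr_sumr -!big_split; apply: eq_bigr => j _ /=; ring.
rewrite A B; ring.
Qed.

Lemma quad0 (D c : R) : (forall t, 0 <= t * D + t ^+ 2 * c) -> D = 0.
Proof.
move=> H.
set u := c ^+ 2 + 1.
have u0 : 0 < u by rewrite /u; nra.
have := H (- D / u).
have -> : - D / u * D + (- D / u) ^+ 2 * c = D ^+ 2 * (c - u) / u ^+ 2.
  by field; rewrite gt_eqF.
move=> h.
have e : D ^+ 2 * (c - u) = (D ^+ 2 * (c - u) / u ^+ 2) * u ^+ 2 by field; rewrite gt_eqF.
have h2 : 0 <= D ^+ 2 * (c - u) by rewrite e; apply: mulr_ge0 => //; apply: sqr_ge0.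
have h3 : D ^+ 2 <= 0 by rewrite /u in h2; nra.
have h4 : D ^+ 2 = 0 by apply/eqP; rewrite eq_le h3 sqr_ge0.
by move/eqP: h4; rewrite sqrf_eq0 => /eqP.
Qed.

Lemma grad0 (h : 'I_n -> R) : psd (fS R S) -> (fS R S).@[h] = 0 ->
  forall m, ((fS R S)^`M(m)).@[h] = 0.
Proof.
move=> Hp E0 m; apply: (@quad0 _ ((fS R S).@[ee m])) => t.
by have := Hp (fun i => h i + t * ee m i); rewrite taylor E0 add0r.
Qed.

Variable k : nat.
Variable g : 'I_k * bool -> S.
Hypothesis ginj : injective g.
Hypothesis Hg : forall a b, (g a < g b)%O = W_lt a b.
Hypothesis k2 : (2 <= k)%N.

Definition sg (a : 'I_k * bool) : R := if a.2 then -1 else 1.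
Definition hh (i : 'I_n) : R := \sum_a (g a == enum_val i)%:R * sg a.

Lemma delta (s : S) (F : 'I_n -> R) : \sum_i (s == enum_val i)%:R * F i = F (enum_rank s).
Proof.
rewrite (bigD1 (enum_rank s)) //= enum_rankK eqxx mul1r big1 ?addr0 // => i ne.
case: eqP => [e|_]; last by rewrite mul0r.
by rewrite e enum_valK eqxx in ne.
Qed.

Lemma hsum (F : 'I_n -> R) : \sum_i hh i * F i = \sum_a sg a * F (enum_rank (g a)).
Proof.
under eq_bigr do rewrite mulr_suml.
rewrite exchange_big /=; apply: eq_bigr => a _.
under eq_bigr do rewrite -mulrA.
by rewrite delta.
Qed.

Lemma hval a : hh (enum_rank (g a)) = sg a.
Proof.
rewrite /hh; under eq_bigr do rewrite enum_rankK (inj_eq ginj).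
rewrite (bigD1 a) //= eqxx mul1r big1 ?addr0 // => b /negbTE ->; by rewrite mul0r.
Qed.

Lemma sum_pair (F : 'I_k * bool -> R) : \sum_a F a = \sum_(i < k) (F (i,true) + F (i,false)).
Proof.
transitivity (\sum_(i < k) \sum_(b : bool) F (i,b)); last by apply: eq_bigr => i _; rewrite big_bool.
by rewrite pair_big; apply: eq_big => // -[i b].
Qed.

Lemma count2 (i : 'I_k) : \sum_(j < k) ((j == i) || (val j == (nat_of_ord i).+1 %% k)%N)%:R = 2 :> R.
Proof.
have k0 : (0 < k)%N by apply: leq_trans k2.
pose i' := Ordinal (ltn_pmod (nat_of_ord i).+1 k0).
have ne : i' != i.
  apply/negP => /eqP/(congr1 val) /= e.
  have := ltn_ord i; move: e k2; case: (ltnP (nat_of_ord i).+1 k) => [lt|ge]; first by rewrite modn_small //; lia.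
  have -> : (nat_of_ord i).+1 = k by have := ltn_ord i; lia.
  rewrite modnn; lia.
rewrite (bigD1 i) //= eqxx /= (bigD1 i') //= eqxx orbT big1 ?addr0 //.
move=> j /andP [ji ji']; rewrite (negbTE ji) /=.
case: eqP => // e; case/negP: ji'; apply/eqP/val_inj => /=; exact: e.
Qed.

Lemma Eh0 : (fS R S).@[hh] = 0.
Proof.
rewrite evalE.
have -> : \sum_(i < n) \sum_(j < n | (enum_val i < enum_val j)%O) hh i * hh j =
   \sum_(i < n) hh i * (\sum_(j < n) hh j * (enum_val i < enum_val j)%O%:R).
  apply: eq_bigr => i _; rewrite big_mkcond mulr_sumr; apply: eq_bigr => j _.
  by case: (_ < _)%O; rewrite /= ?mulr1 ?mulr0.
under eq_bigr do rewrite expr2.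
rewrite !hsum.
under eq_bigr do rewrite hval.
under [X in _ + X]eq_bigr => a _ do rewrite hsum.
under [X in _ + X]eq_bigr => a _ do under eq_bigr => b _ do rewrite !enum_rankK Hg.
rewrite -big_split /= sum_pair big1 // => i _.
rewrite /sg /=.
rewrite (_ : \sum_(b : 'I_k * bool) (if b.2 then -1 else 1) * 0 = 0 :> R); last by rewrite big1 // => b _; rewrite mulr0.
rewrite sum_pair /=.
have -> : \sum_(j < k) (-1 * ((j == i) || (nat_of_ord j == (nat_of_ord i).+1 %% k)%N)%:R + 1 * 0) = - 2 :> R.
  by rewrite -(count2 i) -sumrN; apply: eq_bigr => j _; rewrite mulr0 addr0 mulN1r.
ring.
Qed.


Lemma hnz : exists i, hh i != 0.
Proof.
have k0 : (0 < k)%N by apply: leq_trans k2.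
exists (enum_rank (g (Ordinal k0, false))); rewrite hval /sg /=; exact: oner_neq0.
Qed.

Lemma hH : inH hh.
Proof.
rewrite /inH; under eq_bigr do rewrite -[hh _]mulr1.
rewrite hsum sum_pair big1 // => i _; rewrite /sg /=; ring.
Qed.

End S.

Theorem lemma10 (R : realType) (d : Order.disp_t) (S : finPOrderType d) (k : nat) :
  (2 <= k)%N -> contains_W S k -> psd (fS R S) ->
  exists h : 'I_#|S| -> R, inC (fS R S) h.
Proof.
move=> k2 [g [ginj Hg]] Hp.
exists (hh R g); split; first exact: hH.
  exact: hnz ginj k2.
left => m; rewrite (grad0 Hp) //; exact: Eh0 ginj Hg k2.
Qed.
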